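(* Let $\mathbb{H}$ be a reproducing kernel Hilbert space with inner product $\langle\cdot,\cdot\rangle$ and feature map $\phi$, and let $(X,A,Y)$ be jointly distributed with $Y=\langle\phi(X),y\rangle$ and $A=\langle\phi(X),a\rangle$ for some nonzero $y,a\in\mathbb{H}$, with $\operatorname{Var}(Y),\operatorname{Var}(A)>0$. Let $\Sigma:=\operatorname{Cov}(\phi(X),\phi(X))$ be the covariance operator. Then for every (possibly randomized) representation $Z=g(X)$ with $\operatorname{Var}\mathbb{E}[Y\mid Z]=\operatorname{Var}(Y)$, $$\operatorname{Var}\mathbb{E}[A\mid Z]\ge \frac{\langle a,\Sigma y\rangle^2}{\langle y,\Sigma y\rangle}=\operatorname{Var}(A)\cdot\rho_{YA}^2,$$ where $\rho_{YA}$ is the correlation coefficient of $Y$ and $A$.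
   Context: A (possibly randomized) representation is $Z=g(X,S)$ for a measurable $g$ and auxiliary randomness $S$ independent of $(X,A,Y)$. $\phi(X)$ is assumed to have finite second moment in $\mathbb{H}$. *)

(* Defs.v *)
From HB Require Import structures.
From mathcomp Require Import all_boot all_order all_algebra.
From mathcomp Require Import all_classical all_reals all_analysis.
Set Implicit Arguments. Unset Strict Implicit. Unset Printing Implicit Defensive.
Import Order.TTheory GRing.Theory Num.Theory.
Local Open Scope classical_set_scope.
Local Open Scope ring_scope.

Definition inner_product (R : realType) (V : lmodType R) (ip : V -> V -> R)
  : Prop :=
  [/\ (forall u v, ip u v = ip v u),
      (forall (c : R) u v w, ip (c *: u + v) w = c * ip u w + ip v w),
      (forall u, 0 <= ip u u) &
      (forall u, ip u u = 0 -> u = 0)].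

(* completeness w.r.t. the norm sqrt (ip u u) (stated with squared norms) *)
Definition ip_complete (R : realType) (V : lmodType R) (ip : V -> V -> R)
  : Prop :=
  forall u : nat -> V,
    (forall e : R, 0 < e -> exists N : nat, forall m n : nat,
        (N <= m)%N -> (N <= n)%N -> ip (u m - u n) (u m - u n) < e) ->
    exists l : V, forall e : R, 0 < e -> exists N : nat, forall n : nat,
        (N <= n)%N -> ip (u n - l) (u n - l) < e.

(* (V, ip) is a reproducing kernel Hilbert space of real functions on Tx,
   realized through the injective evaluation map ev : V -> (Tx -> R), with
   feature map phi (phi x = k(x, .)) satisfying the reproducing property
   f(x) = <f, phi x>. *)
Definition is_rkhs (R : realType) (V : lmodType R) (Tx : Type)
  (ip : V -> V -> R) (ev : V -> Tx -> R) (phi : Tx -> V) : Prop :=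
  [/\ inner_product ip, ip_complete ip, injective ev &
      (forall f x, ev f x = ip f (phi x))].

Definition indep_rv (d : measure_display) (T : measurableType d) (R : realType)
  (P : probability T R) (d1 d2 : measure_display)
  (T1 : measurableType d1) (T2 : measurableType d2)
  (U : T -> T1) (W : T -> T2) : Prop :=
  forall (B : set T1) (C : set T2), measurable B -> measurable C ->
    P (U @^-1` B `&` W @^-1` C) = (P (U @^-1` B) * P (W @^-1` C))%E.

(* W is a version of the conditional expectation E[F | Z]:
   W is sigma(Z)-measurable (W = h o Z with h measurable), integrable,
   and has the same integrals as F over every event {Z \in B}. *)
Definition is_cond_exp (d : measure_display) (T : measurableType d)
  (R : realType) (P : probability T R) (dz : measure_display)
  (Tz : measurableType dz) (Z : T -> Tz) (F W : T -> R) : Prop :=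
  [/\ exists h : Tz -> R, measurable_fun setT h /\ W = h \o Z,
      P.-integrable setT (EFin \o W) &
      forall B : set Tz, measurable B ->
        (\int[P]_(w in Z @^-1` B) (W w)%:E = \int[P]_(w in Z @^-1` B) (F w)%:E)%E].

(* Sigma : V -> V is the covariance operator Cov(phi(X), phi(X)):
   <u, Sigma v> = Cov(<phi(X),u>, <phi(X),v>) for all u, v. *)
Definition is_cov_operator (d : measure_display) (T : measurableType d)
  (R : realType) (P : probability T R) (V : lmodType R) (ip : V -> V -> R)
  (dx : measure_display) (Tx : measurableType dx) (X : T -> Tx)
  (phi : Tx -> V) (Sigma : V -> V) : Prop :=
  forall u v, (ip u (Sigma v))%:E =
    covariance P (fun w => ip (phi (X w)) u) (fun w => ip (phi (X w)) v).

Definition correlation (d : measure_display) (T : measurableType d)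
  (R : realType) (P : probability T R) (U W : T -> R) : R :=
  fine (covariance P U W) / Num.sqrt (fine (variance P U) * fine (variance P W)).

(* Main.v *)
Require Import Defs.
From HB Require Import structures.
From mathcomp Require Import all_boot all_order all_algebra.
From mathcomp Require Import all_classical all_reals all_analysis.
Import Order.TTheory GRing.Theory Num.Theory.
Local Open Scope classical_set_scope.
Local Open Scope ring_scope.
From mathcomp Require Import ring lra.
Lemma max0E (R : realType) (x : R) : Num.max x 0 = (x + `|x|) / 2.
Proof.
by case: ger0P => _; field.
Qed.

Lemma maxpos (R : realType) (x y : R) :
  Num.max (x * y) 0 = Num.max x 0 * Num.max y 0 + Num.max (- x) 0 * Num.max (- y) 0 /\
  Num.max (- (x * y)) 0 = Num.max x 0 * Num.max (- y) 0 + Num.max (- x) 0 * Num.max y 0.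
Proof.
by rewrite !max0E !normrN normrM; split; field.
Qed.

Lemma L2_of_var (d : measure_display) (T : measurableType d) (R : realType)
  (P : probability T R) (X : T -> R) :
  measurable_fun setT X -> ('V_P[X] \is a fin_num)%E -> X \in Lfun P 2%:E.
Proof.
move=> mX hV.
set c := fine 'E_P[X].
move: hV; rewrite /variance unlock -/c; clearbody c => hV.
have mXc : measurable_fun setT (X \- cst c)%R.
  by apply: measurable_realfun.measurable_funB => //; exact: measurable_cst.
have h : (X \- cst c)%R \in Lfun P 2%:E.
  rewrite inE; apply/andP; split; rewrite inE /=; first exact: mXc.
  rewrite /finite_norm unlock /=.
  apply: poweR_lty.
  move: hV; rewrite unlock => hf.
  rewrite (_ : (fun x => _) = (fun x => (((X \- cst c) * (X \- cst c))%R x)%:E)).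
    rewrite ge0_fin_numE in hf => //. 
    by apply: integral_ge0 => x _; rewrite lee_fin /= -expr2 sqr_ge0.
  apply: funext => x /=; rewrite powR_mulrn// real_normK ?num_real//.
rewrite (_ : X = (X \- cst c) \+ cst c)%R; last by apply: funext => x /=; rewrite subrK.
apply: rpredD; [exact: lee1n | move=> ?; exact: h | move=> ?; exact: Lfun_cst].
Qed.
From mathcomp Require Import measurable_realfun.
Local Open Scope ereal_scope.
Import HBNNSimple.
Import numFieldNormedType.Exports.
Lemma ext_simple (d : measure_display) (T : measurableType d) (R : realType)
  (mu : {measure set T -> \bar R}) (dz : measure_display) (Tz : measurableType dz)
  (Z : T -> Tz) (F G : T -> R) :
  measurable_fun setT Z -> measurable_fun setT F -> measurable_fun setT G ->
  (forall w, (0 <= F w)%R) -> (forall w, (0 <= G w)%R) ->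
  (forall B, measurable B -> \int[mu]_(w in Z @^-1` B) (F w)%:E
                            = \int[mu]_(w in Z @^-1` B) (G w)%:E) ->
  forall s : {nnsfun Tz >-> R},
  \int[mu]_w (F w * s (Z w))%:E = \int[mu]_w (G w * s (Z w))%:E.
Proof.
move=> mZ mF mG F0 G0 hB s.
have key (H : T -> R) : measurable_fun setT H -> (forall w, (0 <= H w)%R) ->
  \int[mu]_w (H w * s (Z w))%:E =
  \sum_(r \in range s) \int[mu]_w (H w * (r * \1_(s @^-1` [set r]) (Z w)))%:E.
  move=> mH H0.
  rewrite -ge0_integral_fsum//; last 2 first.
  - move=> r; apply/measurable_EFinP; apply: measurable_funM => //.
    apply: measurable_funM => //.
    by apply: measurableT_comp.
  - move=> r w _; rewrite lee_fin mulr_ge0// indicE.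
    case: (boolP (Z w \in _)) => [/set_mem /= <-|]; first by rewrite mulr1.
    by rewrite mulr0.
  apply: eq_integral => w _.
  by rewrite [s (Z w)]fimfunE !fsbig_finite//= mulr_sumr sumEFin.

have mpre B : measurable B -> measurable (Z @^-1` B).
  by move=> mB; rewrite -[_ @^-1` _]setTI; exact: mZ.
have mA r : measurable (Z @^-1` (s @^-1` [set r])).
  by apply: mpre; exact: measurable_sfunP.
have term (H : T -> R) : measurable_fun setT H -> (forall w, (0 <= H w)%R) ->
  forall r, (0 <= r)%R ->
  \int[mu]_w (H w * (r * \1_(s @^-1` [set r]) (Z w)))%:E =
  r%:E * \int[mu]_(w in Z @^-1` (s @^-1` [set r])) (H w)%:E.
  move=> mH H0 r r0.
  rewrite [X in _ = _ * X]integral_mkcond -ge0_integralZl_EFin//; last 2 first.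
  - by move=> w _; rewrite /patch; case: ifP => _; rewrite ?lee_fin.
  - apply/(measurable_restrictT _ _).1 => //.
    by apply/measurable_EFinP; apply: measurable_funS mH.
  apply: eq_integral => w _; rewrite /patch indicE.
  case: ifP => [/set_mem hw|hw].
    by rewrite mem_set// mulr1 mulrC EFinM.
  rewrite memNset ?mulr0 ?mule0 ?mulr0//.
  by move=> hw'; move: hw; rewrite mem_set.
rewrite (key F)// (key G)//.
apply: eq_fsbigr => r /set_mem [z _ szr].
have r0 : (0 <= r)%R by rewrite -szr.
by rewrite !term// hB//; exact: measurable_sfunP.
Qed.

Lemma ext_ge0 (d : measure_display) (T : measurableType d) (R : realType)
  (mu : {measure set T -> \bar R}) (dz : measure_display) (Tz : measurableType dz)
  (Z : T -> Tz) (F G : T -> R) :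
  measurable_fun setT Z -> measurable_fun setT F -> measurable_fun setT G ->
  (forall w, (0 <= F w)%R) -> (forall w, (0 <= G w)%R) ->
  (forall B, measurable B -> \int[mu]_(w in Z @^-1` B) (F w)%:E
                            = \int[mu]_(w in Z @^-1` B) (G w)%:E) ->
  forall k : Tz -> R, measurable_fun setT k -> (forall z, (0 <= k z)%R) ->
  \int[mu]_w (F w * k (Z w))%:E = \int[mu]_w (G w * k (Z w))%:E.
Proof.
move=> mZ mF mG F0 G0 hB k mk k0.
have mk' : measurable_fun setT (EFin \o k) by apply/measurable_EFinP.
pose g := nnsfun_approx measurableT mk'.
have lim (H : T -> R) : measurable_fun setT H -> (forall w, (0 <= H w)%R) ->
  \int[mu]_w (H w * k (Z w))%:E = limn (fun n => \int[mu]_w (H w * g n (Z w))%:E).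
  move=> mH H0.
  rewrite -monotone_convergence//; last 3 first.
  - move=> n; apply/measurable_EFinP; apply: measurable_funM => //.
    exact: measurableT_comp.
  - by move=> n w _; rewrite lee_fin mulr_ge0.
  - move=> w _ m n mn; rewrite lee_fin ler_wpM2l//.
    exact/lefP/nd_nnsfun_approx.
  apply: eq_integral => w _.
  rewrite (_ : (fun n => _) = EFin \o (fun n => H w * g n (Z w))%R)//.
  have hc : (fun n => H w * g n (Z w) : R)%R @ \oo --> (H w * k (Z w) : R)%R.
    apply: cvgMl_tmp.
    rewrite /g; under eq_fun do rewrite nnsfun_approxE.
    exact: (@cvg_approx _ _ _ setT (EFin \o k) (Z w) (fun z _ => k0 z) Logic.I (ltry _)).
  rewrite EFin_lim; last exact: cvgP hc.
  by rewrite (cvg_lim _ hc).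
rewrite (lim F)// (lim G)//; congr (limn _); apply: funext => n.
exact: ext_simple.
Qed.

Lemma mmax0 {d : measure_display} {T : measurableType d} {R : realType} {f : T -> R} :
  measurable_fun setT f -> measurable_fun setT (fun w => Num.max (f w) 0)%R.
Proof. move=> mf; exact: (@measurable_maxr _ _ _ _ f (cst 0%R)). Qed.

Lemma mmax0N {d : measure_display} {T : measurableType d} {R : realType} {f : T -> R} :
  measurable_fun setT f -> measurable_fun setT (fun w => Num.max (- f w) 0)%R.
Proof.
move=> mf; apply: (@measurable_maxr _ _ _ _ (fun w => - f w)%R (cst 0%R)) => //.
exact: measurableT_comp.
Qed.

Lemma orth (d : measure_display) (T : measurableType d) (R : realType)
  (P : probability T R) (dz : measure_display) (Tz : measurableType dz)
  (Z : T -> Tz) (F W : T -> R) (k : Tz -> R) :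
  measurable_fun setT Z -> measurable_fun setT F -> P.-integrable setT (EFin \o F) ->
  is_cond_exp P Z F W -> measurable_fun setT k ->
  P.-integrable setT (EFin \o (fun w => F w * k (Z w))%R) ->
  P.-integrable setT (EFin \o (fun w => W w * k (Z w))%R) ->
  \int[P]_w (F w * k (Z w))%:E = \int[P]_w (W w * k (Z w))%:E.
Proof.
move=> mZ mF iF [[h [mh hW]] iW hB] mk iFk iWk.
have mW : measurable_fun setT W by rewrite hW; exact: measurableT_comp.
pose D w := (F w - W w)%R.
have mD : measurable_fun setT D by exact: measurable_funB.
have mpre B : measurable B -> measurable (Z @^-1` B).
  by move=> mB; rewrite -[_ @^-1` _]setTI; exact: mZ.
have pos (f : T -> R) w : (EFin \o f)^\+ w = (Num.max (f w) 0)%:E.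
  by rewrite funeposE EFin_max.
have neg (f : T -> R) w : (EFin \o f)^\- w = (Num.max (- f w) 0)%:E.
  by rewrite funenegE EFin_max.
have hDB B : measurable B -> \int[P]_(w in Z @^-1` B) (Num.max (D w) 0)%:E =
                             \int[P]_(w in Z @^-1` B) (Num.max (- D w) 0)%:E.
  move=> mB; have mS := mpre B mB.
  have iFS := integrableS measurableT mS (@subsetT _ _) iF.
  have iWS := integrableS measurableT mS (@subsetT _ _) iW.
  have iDS : P.-integrable (Z @^-1` B) (EFin \o D).
    rewrite (_ : EFin \o D = (EFin \o F) \- (EFin \o W)); last first.
      by apply: funext => w /=; rewrite EFinB.
    exact: integrableB.
  have h0 : \int[P]_(w in Z @^-1` B) (D w)%:E = 0.
    rewrite /D; under eq_integral do rewrite EFinB.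
    rewrite integralB_EFin// hB// subee//.
    exact: integrable_fin_num.
  move: h0; rewrite integralE.
  have f1 := integrable_pos_fin_num mS iDS.
  have f2 := integrable_neg_fin_num mS iDS.
  under eq_integral do rewrite pos.
  under [X in _ - X = _]eq_integral do rewrite neg.
  move: f1 f2; under eq_integral do rewrite pos.
  under [X in _ -> X \is a fin_num -> _]eq_integral do rewrite neg.
  move=> f1 f2 /eqP; rewrite sube_eq// ?add0e => /eqP//.
have ge0m (x : R) : (0 <= Num.max x 0)%R by rewrite le_max lexx orbT.
have mkp : measurable_fun setT (fun z => Num.max (k z) 0)%R by exact: mmax0.
have mkn : measurable_fun setT (fun z => Num.max (- k z) 0)%R by exact: mmax0N.
have I1 := @ext_ge0 _ _ _ P _ _ Z _ _ mZ (mmax0 mD) (mmax0N mD) (fun w => ge0m _) (fun w => ge0m _) hDB _ mkp (fun z => ge0m _).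
have I2 := @ext_ge0 _ _ _ P _ _ Z _ _ mZ (mmax0 mD) (mmax0N mD) (fun w => ge0m _) (fun w => ge0m _) hDB _ mkn (fun z => ge0m _).
have iDk : P.-integrable setT (EFin \o (fun w => D w * k (Z w))%R).
  rewrite (_ : EFin \o _ = (EFin \o (fun w => F w * k (Z w))%R) \- (EFin \o (fun w => W w * k (Z w))%R)); last first.
    by apply: funext => w /=; rewrite -EFinB /D mulrBl.
  exact: integrableB.
have mDk : measurable_fun setT (fun w => D w * k (Z w))%R.
  by apply: measurable_funM => //; exact: measurableT_comp.
have mp (f g : T -> R) : measurable_fun setT f -> measurable_fun setT g ->
  measurable_fun setT (fun w => (f w * g w)%:E).
  by move=> ? ?; apply/measurable_EFinP; exact: measurable_funM.
have hpn : \int[P]_w ((EFin \o (fun w => D w * k (Z w))%R)^\+ w) =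
           \int[P]_w ((EFin \o (fun w => D w * k (Z w))%R)^\- w).
  under eq_integral => w _ do rewrite pos (@maxpos _ (D w) (k (Z w))).1 EFinD.
  under [RHS]eq_integral => w _ do rewrite neg (@maxpos _ (D w) (k (Z w))).2 EFinD.
  rewrite ge0_integralD//; last 4 first.
  - by move=> w _; rewrite lee_fin mulr_ge0.
  - exact: mp (mmax0 mD) (measurableT_comp mkp mZ).
  - by move=> w _; rewrite lee_fin mulr_ge0.
  - exact: mp (mmax0N mD) (measurableT_comp mkn mZ).
  rewrite [RHS]ge0_integralD//; last 4 first.
  - by move=> w _; rewrite lee_fin mulr_ge0.
  - exact: mp (mmax0 mD) (measurableT_comp mkn mZ).
  - by move=> w _; rewrite lee_fin mulr_ge0.
  - exact: mp (mmax0N mD) (measurableT_comp mkp mZ).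
  by rewrite I1 I2 addeC.
have e0 : \int[P]_w (D w * k (Z w))%:E = 0.
  rewrite integralE -hpn subee//.
  exact: integrable_pos_fin_num iDk.
move: e0; under eq_integral => w _ do rewrite /D mulrBl EFinB.
rewrite integralB_EFin// => /eqP; rewrite sube_eq ?add0e ?integrable_fin_num//; first by move/eqP.
Qed.

Local Close Scope ereal_scope.

Lemma aux2 (R : realType) (x : R) : (x%:E + x%:E - 2%:E * x%:E = 0)%E.
Proof. rewrite -EFinD; have -> : (x + x - 2 * x = 0)%R by ring. by []. Qed.

Theorem theorem4
  (d : measure_display) (T : measurableType d) (R : realType)
  (P : probability T R)
  (V : lmodType R) (ip : V -> V -> R)
  (dx : measure_display) (Tx : measurableType dx)
  (ev : V -> Tx -> R) (phi : Tx -> V)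
  (Hrkhs : is_rkhs ip ev phi)
  (Hphi_meas : forall h : V, measurable_fun setT (fun x => ip (phi x) h))
  (X : T -> Tx) (HX : measurable_fun setT X)
  (H2mom : P.-integrable setT (fun w => (ip (phi (X w)) (phi (X w)))%:E))
  (y a : V) (Hy : y <> 0) (Ha : a <> 0)
  (Y A : T -> R)
  (HY : Y = (fun w => ip (phi (X w)) y))
  (HA : A = (fun w => ip (phi (X w)) a))
  (HVY : (0 < 'V_P[Y])%E) (HVA : (0 < 'V_P[A])%E)
  (Sigma : V -> V) (HSigma : is_cov_operator P ip X phi Sigma)
  (ds : measure_display) (Ts : measurableType ds)
  (S : T -> Ts) (HS : measurable_fun setT S)
  (Hindep : indep_rv P S (fun w => (X w, A w, Y w)))
  (dz : measure_display) (Tz : measurableType dz)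
  (g : Tx * Ts -> Tz) (Hg : measurable_fun setT g)
  (Z : T -> Tz) (HZ : Z = (fun w => g (X w, S w)))
  (EY EA : T -> R)
  (HEY : is_cond_exp P Z Y EY) (HEA : is_cond_exp P Z A EA)
  (Hsuff : 'V_P[EY] = 'V_P[Y]) :
  ('V_P[EA] >= ((ip a (Sigma y)) ^+ 2 / ip y (Sigma y))%:E)%E /\
  (ip a (Sigma y)) ^+ 2 / ip y (Sigma y)
    = fine 'V_P[A] * (correlation P Y A) ^+ 2.
Proof.
have mZ : measurable_fun setT Z.
  by rewrite HZ; apply: measurableT_comp Hg _; exact: measurable_fun_pair.
have mY : measurable_fun setT Y by rewrite HY; exact: measurableT_comp (Hphi_meas y) HX.
have mA : measurable_fun setT A by rewrite HA; exact: measurableT_comp (Hphi_meas a) HX.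
have VY : 'V_P[Y] = (ip y (Sigma y))%:E by rewrite HSigma HY.
have VA : 'V_P[A] = (ip a (Sigma a))%:E by rewrite HSigma HA.
have CAY : covariance P A Y = (ip a (Sigma y))%:E by rewrite HSigma HA HY.
set c := ip a (Sigma y) in CAY *.
set vY := ip y (Sigma y) in VY *.
set vA := ip a (Sigma a) in VA.
have vY0 : 0 < vY by move: HVY; rewrite VY lte_fin.
have vA0 : 0 < vA by move: HVA; rewrite VA lte_fin.
split; last first.
  rewrite /correlation covarianceC CAY VY VA /= expr_div_n sqr_sqrtr; last first.
    by rewrite mulr_ge0// ltW.
  by field; rewrite !gt_eqF.
have Pfin : P setT \is a fin_num := fin_num_measure P _ measurableT.
have Y2 : Y \in Lfun P 2%:E by apply: L2_of_var => //; rewrite VY.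
have A2 : A \in Lfun P 2%:E by apply: L2_of_var => //; rewrite VA.
have HEY' := HEY; have HEA' := HEA.
case: HEY' => [[hY [mhY hEY]] iEY condY].
case: HEA' => [[hA [mhA hEA]] iEA condA].
have mEY : measurable_fun setT EY by rewrite hEY; exact: measurableT_comp.
have mEA : measurable_fun setT EA by rewrite hEA; exact: measurableT_comp.
have EY2 : EY \in Lfun P 2%:E by apply: L2_of_var => //; rewrite Hsuff VY.
have [VEAoo|VEAfin] : 'V_P[EA] = +oo%E \/ 'V_P[EA] \is a fin_num.
  have := variance_ge0 P EA.
  by case: ('V_P[EA]) => [r||] //; [right|left].
  by rewrite VEAoo leey.
have EA2 : EA \in Lfun P 2%:E by apply: L2_of_var.
have L1 (f : T -> R) : f \in Lfun P 2%:E -> f \in Lfun P 1 by apply: Lfun_subset12.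
have EEY : ('E_P[EY] = 'E_P[Y])%E.
  by rewrite unlock; have := condY setT measurableT; rewrite !preimage_setT.
have EEA : ('E_P[EA] = 'E_P[A])%E.
  by rewrite unlock; have := condA setT measurableT; rewrite !preimage_setT.
have I2 (f f2 : T -> R) : f \in Lfun P 2%:E -> f2 \in Lfun P 2%:E ->
    P.-integrable setT (EFin \o (fun w => f w * f2 w)).
  by move=> hf hg; apply/Lfun1_integrable; exact: Lfun2_mul_Lfun1.
have hY2 : (hY \o Z) \in Lfun P 2%:E by rewrite -hEY.
have hA2 : (hA \o Z) \in Lfun P 2%:E by rewrite -hEA.
have O1 : ('E_P[Y * EY] = 'E_P[EY * EY])%E.
  rewrite unlock hEY; apply: (@orth _ _ _ P _ _ Z Y (hY \o Z) hY mZ mY _ _ mhY).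
  - exact/Lfun1_integrable/L1.
  - by rewrite -hEY.
  - exact: (I2 Y (hY \o Z)).
  - exact: (I2 (hY \o Z) (hY \o Z)).
have O2 : ('E_P[A * EY] = 'E_P[EA * EY])%E.
  rewrite unlock hEY hEA; apply: (@orth _ _ _ P _ _ Z A (hA \o Z) hY mZ mA _ _ mhY).
  - exact/Lfun1_integrable/L1.
  - by rewrite -hEA.
  - exact: (I2 A (hY \o Z)).
  - exact: (I2 (hA \o Z) (hY \o Z)).
have Y1 := L1 _ Y2; have EY1 := L1 _ EY2; have A1 := L1 _ A2; have EA1 := L1 _ EA2.
have M (f f2 : T -> R) : f \in Lfun P 2%:E -> f2 \in Lfun P 2%:E -> (f * f2)%R \in Lfun P 1.
  by move=> hf hf2; exact: Lfun2_mul_Lfun1.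
have CYEY : covariance P Y EY = 'V_P[EY].
  by rewrite /variance !covarianceE ?M // O1 EEY.
have YmEY2 : (Y \- EY)%R \in Lfun P 2%:E.
  by apply: rpredB; [exact: lee1n| move=> ?; exact: Y2| move=> ?; exact: EY2].
have NEA2 : (\- EA)%R \in Lfun P 2%:E.
  by rewrite rpredN.
have NA2 : (\- A)%R \in Lfun P 2%:E.
  by rewrite rpredN.
have V0 : 'V_P[(Y \- EY)%R] = 0%E.
  by rewrite varianceB // CYEY Hsuff VY aux2.
have C0 : covariance P A (Y \- EY)%R = 0%E.
  apply/le_anti/andP; split.
  - by have := covariance_le A2 YmEY2; rewrite V0 sqrte0 mule0.
  - have := covariance_le NA2 YmEY2; rewrite V0 sqrte0 mule0.
    by rewrite covarianceNl ?M ?L1 // oppe_le0.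
have CAEY : covariance P A EY = c%:E.
  have := covarianceBr A2 Y2 EY2; rewrite C0 CAY => /esym/eqP.
  rewrite sube_eq // ?add0e; first by move/eqP.
have CEAEY : covariance P EA EY = c%:E.
  by rewrite -CAEY !covarianceE ?M // O2 EEA.
have h1 := covariance_le EA2 EY2; rewrite CEAEY Hsuff VY in h1.
have h2 := covariance_le NEA2 EY2.
rewrite covarianceNl ?M // CEAEY varianceN // Hsuff VY in h2.
have v0 := variance_ge0 P EA.
move: VEAfin v0 h1 h2; case: ('V_P[EA]) => [v||] //= _.
rewrite -!EFinM !lee_fin => v0 h1 h2.
rewrite ler_pdivrMr //.
have sv := sqr_sqrtr v0; have svY := sqr_sqrtr (ltW vY0).
have s1 := sqrtr_ge0 v; have s2 := sqrtr_ge0 vY.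
nra.
Qed.
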